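(* Let $U:\mathbb{R}^d\to\mathbb{R}$ be twice continuously differentiable. For all $q_0,p_0\in\mathbb{R}^d$ and $h>0$, writing $(q_1,p_1)=\Phi_h(q_0,p_0)$ and $q_t=q_0+t(q_1-q_0)$ for $t\in[0,1]$, $$\begin{aligned}H(\Phi_h(q_0,p_0))-H(q_0,p_0)&=h^2\int_0^1\langle p_0,\nabla^2U(q_t)p_0\rangle(1/2-t)\,dt+h^3\int_0^1\langle p_0,\nabla^2U(q_t)\nabla U(q_0)\rangle(t-1/4)\,dt\\&\quad-\frac{h^4}{4}\int_0^1\langle\nabla U(q_0),\nabla^2U(q_t)\nabla U(q_0)\rangle\,t\,dt+\frac{h^4}{8}\Big\|\int_0^1\nabla^2U(q_t)p_0\,dt\Big\|^2\\&\quad-\frac{h^5}{8}\Big\langle\int_0^1\nabla^2U(q_t)\nabla U(q_0)\,dt,\int_0^1\nabla^2U(q_t)p_0\,dt\Big\rangle+\frac{h^6}{32}\Big\|\int_0^1\nabla^2U(q_t)\nabla U(q_0)\,dt\Big\|^2.\end{aligned}$$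
   Context: $H(q,p)=U(q)+\|p\|^2/2$. The leapfrog map is $\Phi_h=\Psi^{(1)}_h\circ\Psi^{(2)}_h\circ\Psi^{(1)}_h$ with $\Psi^{(1)}_h(q,p)=(q,p-(h/2)\nabla U(q))$ and $\Psi^{(2)}_h(q,p)=(q+hp,p)$, i.e. $q_1=q_0+hp_0-(h^2/2)\nabla U(q_0)$ and $p_1=p_0-(h/2)(\nabla U(q_0)+\nabla U(q_1))$. *)

(* Defs.v *)
From HB Require Import structures.
From mathcomp Require Import all_boot all_order all_algebra.
From mathcomp Require Import all_classical all_reals all_analysis.
Set Implicit Arguments. Unset Strict Implicit. Unset Printing Implicit Defensive.
Import Order.TTheory GRing.Theory Num.Theory numFieldNormedType.Exports.
Local Open Scope classical_set_scope.
Local Open Scope ring_scope.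

Section Defs.
Variables (R : realType) (d : nat).
Notation vec := 'rV[R]_d.

Definition dotv (u v : vec) : R := \sum_(i < d) u ord0 i * v ord0 i.
Definition sqnorm (v : vec) : R := dotv v v.

Definition ebase (i : 'I_d) : vec := delta_mx ord0 i.

Definition partial (i : 'I_d) (f : vec -> R) (x : vec) : R := 'D_(ebase i) f x.

Definition grad (U : vec -> R) (x : vec) : vec := \row_i partial i U x.
Definition hess (U : vec -> R) (x : vec) : 'M[R]_d :=
  \matrix_(i, j) partial j (partial i U) x.
Definition hess_app (U : vec -> R) (x v : vec) : vec :=
  \row_i \sum_(j < d) hess U x i j * v ord0 j.

Definition C2 (U : vec -> R) : Prop :=
  (forall x, differentiable U x) /\
  (forall i x, differentiable (partial i U) x) /\
  (forall i j, continuous (partial j (partial i U))).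

Definition Ham (U : vec -> R) (qp : vec * vec) : R :=
  U qp.1 + sqnorm qp.2 / 2.

Definition Psi1 (U : vec -> R) (h : R) (qp : vec * vec) : vec * vec :=
  (qp.1, qp.2 - (h / 2) *: grad U qp.1).
Definition Psi2 (h : R) (qp : vec * vec) : vec * vec :=
  (qp.1 + h *: qp.2, qp.2).
Definition leapfrog (U : vec -> R) (h : R) (qp : vec * vec) : vec * vec :=
  Psi1 U h (Psi2 h (Psi1 U h qp)).

Definition int01 (f : R -> R) : R :=
  \int[@lebesgue_measure R]_(t in `[0%R, 1%R]) f t.
Definition int01v (f : R -> vec) : vec := \row_i int01 (fun t => f t ord0 i).

End Defs.

(* Main.v *)
Require Import Defs.
From HB Require Import structures.
From mathcomp Require Import all_boot all_order all_algebra.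
From mathcomp Require Import all_classical all_reals all_analysis.
From mathcomp Require Import ring lra.
Import Order.TTheory GRing.Theory Num.Theory numFieldNormedType.Exports.
Local Open Scope ring_scope.
Set Implicit Arguments. Unset Strict Implicit.

Section Helpers.
Variables (R : realType) (d : nat).
Notation vec := 'rV[R]_d.

Lemma line_deriv (f : vec -> R) (x u : vec) (t : R) :
  derivable f (x + t *: u) u ->
  is_derive t 1 (fun s => f (x + s *: u)) ('D_u f (x + t *: u)).
Proof.
move=> df.
have E : (fun h : R => h^-1 *: (((fun s => f (x + s *: u)) \o shift t) (h *: 1) - f (x + t *: u)))
   = (fun h : R => h^-1 *: ((f \o shift (x + t *: u)) (h *: u) - f (x + t *: u))).
  apply/funext => h /=; congr (_ *: (f _ - _)).
  by rewrite -[h *: 1]/(h * 1) mulr1 scalerDl addrCA addrC.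
split; first by move: df; rewrite /derivable -E.
by rewrite /derive E.
Qed.

Lemma cont_ball (F : vec -> R) y e : continuous F -> 0 < e ->
  exists2 del, 0 < del & forall z, `|y - z| < del -> `|F y - F z| < e.
Proof.
move=> cF e0; have := cvgr_dist_lt F (F y) (cF y) e e0.
move=> /(_ (nbhs_filter y)) /nbhs_normP [del del0 H]; exists del => // z yz; exact: H.
Qed.

Lemma mvt0 (g dg : R -> R) s : 0 < s -> (forall t : R, is_derive t (1:R) g (dg t)) ->
  exists2 c, 0 < c < s & g s - g 0 = dg c * s.
Proof.
move=> s0 dG.
have cg : {within `[0, s], continuous g}%classic.
  apply: continuous_subspaceT => x; apply/differentiable_continuous/derivable1_diffP.
  exact: (@ex_derive _ _ _ _ _ _ _ (dG x)).
have [c cin E] := @MVT R g dg 0 s s0 (fun x _ => dG x) cg.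
by exists c; [move: cin; rewrite in_itv | rewrite E subr0].
Qed.

Lemma double_diff (f : vec -> R) (i j : 'I_d) (y : vec) (s : R) :
  (forall x, differentiable f x) -> (forall i x, differentiable (partial i f) x) ->
  0 < s -> exists xi, exists eta, 0 < xi < s /\ 0 < eta < s /\
  f (y + s *: ebase R i + s *: ebase R j) - f (y + s *: ebase R i) - f (y + s *: ebase R j) + f y
  = s * s * partial j (partial i f) (y + xi *: ebase R i + eta *: ebase R j).
Proof.
move=> df dp s0.
set u := ebase R i; set w := ebase R j.
pose g t := f ((y + s *: w) + t *: u) - f (y + t *: u).
pose dg t := partial i f ((y + s *: w) + t *: u) - partial i f (y + t *: u).
have dG t : is_derive t (1:R) g (dg t).
  apply: is_deriveB; apply: line_deriv; exact: diff_derivable.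
have [xi xiin E1] := @mvt0 g dg s s0 dG.
pose k t := partial i f ((y + xi *: u) + t *: w).
have dK t : is_derive t (1:R) k (partial j (partial i f) ((y + xi *: u) + t *: w)).
  apply: line_deriv; exact: diff_derivable.
have [eta etain E2] := @mvt0 k _ s s0 dK.
exists xi, eta; split => //; split => //.
have -> : f (y + s *: u + s *: w) - f (y + s *: u) - f (y + s *: w) + f y = g s - g 0.
  rewrite /g !scale0r !addr0 [y + s *: u + _]addrAC; ring.
rewrite E1 /dg.
have -> : partial i f (y + s *: w + xi *: u) - partial i f (y + xi *: u) = k s - k 0.
  by rewrite /k scale0r addr0 [y + s *: w + _]addrAC.
by rewrite E2 -mulrA mulrC.
Qed.

Lemma small_disp (y u w : vec) (a b s C : R) : 0 < s -> 0 < a < s -> 0 < b < s ->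
  `|u| + `|w| < C -> `|y - (y + a *: u + b *: w)| < s * C.
Proof.
move=> s0 /andP[a0 as_] /andP[b0 bs] uwC.
rewrite -addrA opprD addrA subrr add0r normrN.
apply: (le_lt_trans (ler_normD _ _)); rewrite !normrZ !ger0_norm ?ltW //.
have nu := normr_ge0 u; have nw := normr_ge0 w.
have h1 : a * `|u| <= s * `|u| by rewrite ler_wpM2r // ltW.
have h2 : b * `|w| <= s * `|w| by rewrite ler_wpM2r // ltW.
have h3 : s * (`|u| + `|w|) < s * C by rewrite ltr_pM2l.
rewrite mulrDr in h3; lra.
Qed.

Lemma close_eq (a b z e : R) : `|a - z| < e / 2 -> `|b - z| < e / 2 -> `|a - b| <= e.
Proof.
move=> h1 h2; have -> : a - b = (a - z) - (b - z) by ring.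
apply/ltW/(le_lt_trans (ler_normB _ _)); rewrite [e]splitr; exact: ltrD.
Qed.

Lemma schwarz (f : vec -> R) :
  (forall x, differentiable f x) -> (forall i x, differentiable (partial i f) x) ->
  (forall i j, continuous (partial j (partial i f))) ->
  forall i j y, partial j (partial i f) y = partial i (partial j f) y.
Proof.
move=> df dp cp i j y.
apply/eqP; rewrite -subr_eq0 -normr_le0; apply/ler_addgt0Pr => e e0; rewrite add0r.
have e20 : 0 < e / 2 by rewrite divr_gt0.
have [d1 d10 H1] := @cont_ball _ y _ (cp i j) e20.
have [d2 d20 H2] := @cont_ball _ y _ (cp j i) e20.
pose C := `|ebase R i| + `|ebase R j| + 1.
have C0 : 0 < C.
  have := normr_ge0 (ebase R i); have := normr_ge0 (ebase R j); rewrite /C; lra.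
have Cb : `|ebase R i| + `|ebase R j| < C by rewrite /C ltrDl ltr01.
clearbody C.
pose m := Num.min d1 d2.
have m0 : 0 < m by rewrite lt_min d10 d20.
pose s := m / C.
have s0 : 0 < s by rewrite divr_gt0.
have sC : s * C = m by rewrite /s divfK // gt_eqF.
clearbody s.
have [xi [eta [xin [etan E1]]]] := @double_diff f i j y s df dp s0.
have [xi' [eta' [xin' [etan' E2]]]] := @double_diff f j i y s df dp s0.
have E : partial j (partial i f) (y + xi *: ebase R i + eta *: ebase R j)
       = partial i (partial j f) (y + xi' *: ebase R j + eta' *: ebase R i).
  have ss0 : s * s != 0 by rewrite mulf_neq0 // gt_eqF.
  have e3 : f (y + s *: ebase R j + s *: ebase R i) = f (y + s *: ebase R i + s *: ebase R j).
    by rewrite addrAC.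
  apply: (mulfI ss0); apply: (etrans (esym E1)); apply: (etrans _ E2); rewrite e3; ring.
have B1 : `|y - (y + xi *: ebase R i + eta *: ebase R j)| < d1.
  apply: (lt_le_trans (@small_disp y _ _ _ _ s C s0 xin etan Cb)).
  by rewrite sC ge_min lexx.
have B2 : `|y - (y + xi' *: ebase R j + eta' *: ebase R i)| < d2.
  apply: (lt_le_trans (@small_disp y _ _ _ _ s C s0 xin' etan' _)); first by rewrite addrC.
  by rewrite sC ge_min lexx orbT.
have h1 := H1 _ B1; have h2 := H2 _ B2.
rewrite E in h1.
exact: close_eq h1 h2.
Qed.

Lemma dir_deriv (f : vec -> R) (y v : vec) : differentiable f y ->
  'D_v f y = \sum_(j < d) v ord0 j * partial j f y.
Proof.
move=> df; rewrite /partial deriveE //.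
rewrite {1}(row_sum_delta v) linear_sum /=.
apply: eq_bigr => j _; rewrite linearZ /= deriveE //.
Qed.


Lemma cont_add (f g : R -> R) : continuous f -> continuous g -> continuous (fun t => f t + g t).
Proof. by move=> cf cg x; exact: (continuousD (cf x) (cg x)). Qed.

Lemma cont_mul (f g : R -> R) : continuous f -> continuous g -> continuous (fun t => f t * g t).
Proof. by move=> cf cg x; exact: (continuousM (cf x) (cg x)). Qed.

Lemma cont_cst (c : R) : continuous (fun _ : R => c).
Proof. by move=> x; apply: cst_continuous. Qed.

Lemma cont_id : continuous (fun t : R => t).
Proof. by move=> x. Qed.

Lemma cont_sum n (F : 'I_n -> R -> R) : (forall i, continuous (F i)) ->
  continuous (fun t => \sum_(i < n) F i t).
Proof.
elim: n F => [|n IH] F cF.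
  by under eq_fun do rewrite big_ord0; exact: cont_cst.
under eq_fun do rewrite big_ord_recr /=.
apply: cont_add => //; exact: IH.
Qed.

Lemma cont_line (F : vec -> R) (x u : vec) : continuous F ->
  continuous (fun t : R => F (x + t *: u)).
Proof.
move=> cF t; apply: continuous_comp; last exact: cF.
apply: continuousD; first exact: cst_continuous.
exact: scalel_continuous.
Qed.

Lemma dotvC (u v : vec) : dotv u v = dotv v u.
Proof. by apply: eq_bigr => i _; rewrite mulrC. Qed.

Lemma dotvDl (u v w : vec) : dotv (u + v) w = dotv u w + dotv v w.
Proof. by rewrite /dotv -big_split; apply: eq_bigr => i _; rewrite mxE mulrDl. Qed.

Lemma dotvNl (u w : vec) : dotv (- u) w = - dotv u w.
Proof. by rewrite /dotv -sumrN; apply: eq_bigr => i _; rewrite mxE mulNr. Qed.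

Lemma dotvZl (c : R) (u w : vec) : dotv (c *: u) w = c * dotv u w.
Proof. by rewrite /dotv mulr_sumr; apply: eq_bigr => i _; rewrite mxE mulrA. Qed.

Lemma dotvDr (u v w : vec) : dotv w (u + v) = dotv w u + dotv w v.
Proof. by rewrite !(dotvC w) dotvDl. Qed.

Lemma dotvNr (u w : vec) : dotv w (- u) = - dotv w u.
Proof. by rewrite !(dotvC w) dotvNl. Qed.

Lemma dotvZr (c : R) (u w : vec) : dotv w (c *: u) = c * dotv w u.
Proof. by rewrite !(dotvC w) dotvZl. Qed.

Lemma hess_appD U (y u v : vec) : hess_app U y (u + v) = hess_app U y u + hess_app U y v.
Proof.
apply/rowP => i; rewrite !mxE -big_split; apply: eq_bigr => j _.
by rewrite ?mxE mulrDr.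
Qed.

Lemma hess_appN U (y u : vec) : hess_app U y (- u) = - hess_app U y u.
Proof.
apply/rowP => i; rewrite !mxE -sumrN; apply: eq_bigr => j _.
by rewrite ?mxE mulrN.
Qed.

Lemma hess_appZ U (y u : vec) c : hess_app U y (c *: u) = c *: hess_app U y u.
Proof.
apply/rowP => i; rewrite !mxE mulr_sumr; apply: eq_bigr => j _.
by rewrite ?mxE mulrCA.
Qed.

Lemma ftc01 (F f : R -> R) : continuous f ->
  (forall t : R, is_derive t (1:R) F (f t)) -> int01 f = F 1 - F 0.
Proof.
move=> cf dF.
have cF : continuous F.
  move=> x; apply/differentiable_continuous/derivable1_diffP.
  exact: (@ex_derive _ _ _ _ _ _ _ (dF x)).
rewrite /int01 /Rintegral (@continuous_FTC2 _ f F) //.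
- by apply: continuous_subspaceT.
- split.
  + by move=> x _; exact: (@ex_derive _ _ _ _ _ _ _ (dF x)).
  + by apply: cvg_at_right_filter; exact: cF.
  + by apply: cvg_at_left_filter; exact: cF.
- by move=> x _; rewrite derive1E; exact: (@derive_val _ _ _ _ _ _ _ (dF x)).
Qed.

Lemma int01_integrable (f : R -> R) : continuous f ->
  (@lebesgue_measure R).-integrable `[0%R, 1%R] (EFin \o f).
Proof.
move=> cf; apply: continuous_compact_integrable; first exact: segment_compact.
exact: continuous_subspaceT.
Qed.

Lemma int01D (f g : R -> R) : continuous f -> continuous g ->
  int01 (fun t => f t + g t) = int01 f + int01 g.
Proof. by move=> cf cg; rewrite /int01 RintegralD //; exact: int01_integrable. Qed.

Lemma int01B (f g : R -> R) : continuous f -> continuous g ->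
  int01 (fun t => f t - g t) = int01 f - int01 g.
Proof. by move=> cf cg; rewrite /int01 RintegralB //; exact: int01_integrable. Qed.

Lemma int01Z (f : R -> R) c : continuous f ->
  int01 (fun t => c * f t) = c * int01 f.
Proof. by move=> cf; rewrite /int01 RintegralZl //; exact: int01_integrable. Qed.

Lemma int01_ext (f g : R -> R) : (forall t, f t = g t) -> int01 f = int01 g.
Proof. by move=> e; congr int01; apply/funext. Qed.

Lemma int01_0 : int01 (fun _ : R => 0) = 0.
Proof.
rewrite (@int01_ext _ (fun t => 0 * 0)); last by move=> t; rewrite mul0r.
by rewrite int01Z ?mul0r //; exact: cont_cst.
Qed.

Lemma int01_sum n (F : 'I_n -> R -> R) : (forall i, continuous (F i)) ->
  int01 (fun t => \sum_(i < n) F i t) = \sum_(i < n) int01 (F i).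
Proof.
elim: n F => [|n IH] F cF.
  by rewrite big_ord0 (@int01_ext _ (fun _ => 0)) ?int01_0 // => t; rewrite big_ord0.
rewrite big_ord_recr /= -IH //.
rewrite (@int01_ext _ (fun t => \sum_(i < n) F (widen_ord (leqnSn n) i) t + F ord_max t)).
  by rewrite int01D //; apply: cont_sum.
by move=> t; rewrite big_ord_recr.
Qed.

Lemma dotv_int01v (w : vec) (F : R -> vec) :
  (forall i, continuous (fun t => F t ord0 i)) ->
  dotv w (int01v F) = int01 (fun t => dotv w (F t)).
Proof.
move=> cF; rewrite /dotv int01_sum.
  by apply: eq_bigr => i _; rewrite mxE -int01Z.
by move=> i; apply: cont_mul => //; exact: cont_cst.
Qed.


Lemma der_ext (f g : R -> R) (t df : R) : (forall s, f s = g s) ->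
  is_derive t (1:R) f df -> is_derive t (1:R) g df.
Proof. by move=> e; have -> : f = g by apply/funext. Qed.

Lemma der_eq (f : R -> R) (t df df' : R) :
  is_derive t (1:R) f df -> df = df' -> is_derive t (1:R) f df'.
Proof. by move=> H <-. Qed.

Lemma derD (f g : R -> R) (t df dg : R) : is_derive t (1:R) f df -> is_derive t (1:R) g dg ->
  is_derive t (1:R) (fun s => f s + g s) (df + dg).
Proof. by move=> Hf Hg; exact: is_deriveD. Qed.

Lemma derM (f g : R -> R) (t df dg : R) : is_derive t (1:R) f df -> is_derive t (1:R) g dg ->
  is_derive t (1:R) (fun s => f s * g s) (f t * dg + g t * df).
Proof. by move=> Hf Hg; exact: is_deriveM. Qed.

Lemma der_cst (c t : R) : is_derive t (1:R) (fun _ => c) 0.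
Proof. exact: is_derive_cst. Qed.

Lemma der_1m (t : R) : is_derive t (1:R) (fun s => 1 - s) (-1).
Proof.
have H := derD (der_cst 1 t) (derM (der_cst (-1) t) (@is_derive_id _ _ t 1)).
apply: der_eq; last by rewrite add0r mul1r.
Qed.

Lemma der_sum n (F : 'I_n -> R -> R) (dF : 'I_n -> R) (t : R) :
  (forall i, is_derive t (1:R) (F i) (dF i)) ->
  is_derive t (1:R) (fun s => \sum_(i < n) F i s) (\sum_(i < n) dF i).
Proof.
elim: n F dF => [|n IH] F dF H.
  rewrite big_ord0; apply: der_ext (der_cst 0 t) => s; by rewrite big_ord0.
rewrite big_ord_recr /=.
apply: der_ext (derD (IH _ _ (fun i => H _)) (H ord_max)) => s.
by rewrite big_ord_recr.
Qed.


Fixpoint allc (fs : seq (R * (R -> R))) : Prop :=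
  if fs is p :: fs' then continuous p.2 /\ allc fs' else True.

Lemma cont_lin fs : allc fs -> continuous (fun t => \sum_(p <- fs) p.1 * p.2 t).
Proof.
elim: fs => [|p fs IH] /=.
  by move=> _; under eq_fun do rewrite big_nil; exact: cont_cst.
move=> [cp H]; under eq_fun do rewrite big_cons.
apply: cont_add; last exact: IH.
apply: cont_mul => //; exact: cont_cst.
Qed.

Lemma int01_lin fs : allc fs ->
  int01 (fun t => \sum_(p <- fs) p.1 * p.2 t) = \sum_(p <- fs) p.1 * int01 p.2.
Proof.
elim: fs => [|p fs IH] /=.
  by move=> _; rewrite big_nil (@int01_ext _ (fun _ => 0)) ?int01_0 // => t; rewrite big_nil.
move=> [cp H]; rewrite big_cons -IH //.
rewrite (@int01_ext _ (fun t => p.1 * p.2 t + \sum_(p <- fs) p.1 * p.2 t)).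
  rewrite int01D ?int01Z //; last exact: cont_lin.
  by apply: cont_mul => //; exact: cont_cst.
by move=> t; rewrite big_cons.
Qed.

Lemma der_cont (F f : R -> R) : (forall t : R, is_derive t (1:R) F (f t)) -> continuous F.
Proof.
move=> dF x; apply/differentiable_continuous/derivable1_diffP.
exact: (@ex_derive _ _ _ _ _ _ _ (dF x)).
Qed.

Lemma cont_1m : continuous (fun t : R => 1 - t).
Proof. exact: (der_cont (@der_1m)). Qed.
End Helpers.

Theorem lemma15 (R : realType) (d : nat) (U : 'rV[R]_d -> R) :
  C2 U ->
  forall (q0 p0 : 'rV[R]_d) (h : R), 0 < h ->
  let q1 := (leapfrog U h (q0, p0)).1 in
  let qt := fun t : R => q0 + t *: (q1 - q0) in
  let g0 := grad U q0 in
  Ham U (leapfrog U h (q0, p0)) - Ham U (q0, p0) =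
    h ^+ 2 * int01 (fun t => dotv p0 (hess_app U (qt t) p0) * (1 / 2 - t))
  + h ^+ 3 * int01 (fun t => dotv p0 (hess_app U (qt t) g0) * (t - 1 / 4))
  - h ^+ 4 / 4 * int01 (fun t => dotv g0 (hess_app U (qt t) g0) * t)
  + h ^+ 4 / 8 * sqnorm (int01v (fun t => hess_app U (qt t) p0))
  - h ^+ 5 / 8 * dotv (int01v (fun t => hess_app U (qt t) g0))
                      (int01v (fun t => hess_app U (qt t) p0))
  + h ^+ 6 / 32 * sqnorm (int01v (fun t => hess_app U (qt t) g0)).
Proof.
move=> [dU [dP cP]] q0 p0 h h0 q1 qt g0.
pose D := q1 - q0.
have DE : D = h *: p0 - (h ^+ 2 / 2) *: g0.
  rewrite /D /q1 /leapfrog /Psi1 /Psi2 /= addrAC subrr add0r scalerBr scalerA.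
  by rewrite expr2 mulrA.
have q1D : q0 + D = q1 by rewrite /D addrC subrK.
have sym : forall y v w, dotv w (hess_app U y v) = dotv v (hess_app U y w).
  move=> y v w; rewrite /dotv.
  under eq_bigr do rewrite mxE mulr_sumr.
  rewrite exchange_big /=; apply: eq_bigr => j _; rewrite mxE mulr_sumr.
  apply: eq_bigr => i _; rewrite !mxE (schwarz dU dP cP i j y); ring.
have cHa : forall v i, continuous (fun t => hess_app U (qt t) v ord0 i).
  move=> v i; under eq_fun do rewrite mxE.
  apply: cont_sum => j; apply: cont_mul; last exact: cont_cst.
  under eq_fun do rewrite mxE.
  exact: cont_line (cP i j).
have cHd : forall w v, continuous (fun t => dotv w (hess_app U (qt t) v)).
  move=> w v; rewrite /dotv; apply: cont_sum => i; apply: cont_mul; last exact: cHa.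
  exact: cont_cst.

have Fg : forall i, partial i U q1 - partial i U q0 = int01 (fun t => hess_app U (qt t) D ord0 i).
  move=> i.
  have dF : forall t : R, is_derive t (1:R) (fun t => partial i U (q0 + t *: D))
      (hess_app U (qt t) D ord0 i).
    move=> t.
    have L := @line_deriv R d (partial i U) q0 D t (diff_derivable (v := D) (dP i (q0 + t *: D))).
    apply: der_eq L _.
    rewrite dir_deriv // mxE; apply: eq_bigr => j _; by rewrite /hess !mxE mulrC.
  by rewrite (ftc01 (cHa D i) dF) scale1r scale0r addr0 q1D.
have gradE : grad U q1 = g0 + h *: int01v (fun t => hess_app U (qt t) p0)
    - (h ^+ 2 / 2) *: int01v (fun t => hess_app U (qt t) g0).
  apply/rowP => i; rewrite !mxE.
  have E := Fg i.
  rewrite (int01_ext (g := fun t => h * hess_app U (qt t) p0 ord0 i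
       - h ^+ 2 / 2 * hess_app U (qt t) g0 ord0 i)) in E; last first.
    by move=> t; rewrite DE hess_appD hess_appN !hess_appZ !mxE.
  rewrite int01B in E; try (apply: cont_mul; [exact: cont_cst | exact: cHa]).
  rewrite !int01Z in E; try exact: cHa.
  by rewrite -[partial i U q1](subrK (partial i U q0)) E; ring.

pose phi1 t := \sum_(j < d) D ord0 j * partial j U (q0 + t *: D).
have FU : int01 (fun t : R => (1 - t) * dotv D (hess_app U (qt t) D)) = U q1 - U q0 - dotv D g0.
  have cf : continuous (fun t : R => (1 - t) * dotv D (hess_app U (qt t) D)).
    apply: cont_mul; [exact: cont_1m | exact: cHd].
  have dF : forall t : R, is_derive t (1:R) (fun t : R => U (q0 + t *: D) + (1 - t) * phi1 t)
      ((1 - t) * dotv D (hess_app U (qt t) D)).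
    move=> t.
    have H1 := @line_deriv R d U q0 D t (diff_derivable (v := D) (dU (q0 + t *: D))).
    have H2 : is_derive t (1:R) phi1 (dotv D (hess_app U (qt t) D)).
      apply: der_eq.
        apply: der_sum => j.
        exact: derM (der_cst _ _) (@line_deriv R d (partial j U) q0 D t
                  (diff_derivable (v := D) (dP j (q0 + t *: D)))).
      rewrite /dotv; apply: eq_bigr => j _.
      rewrite mulr0 addr0 dir_deriv // !mxE; congr (_ * _).
      by apply: eq_bigr => k _; rewrite /hess !mxE mulrC.
    have H3 := derD H1 (derM (der_1m t) H2).
    apply: der_eq H3 _.
    have -> : 'D_D U (q0 + t *: D) = phi1 t by rewrite dir_deriv.
    ring.
  rewrite (ftc01 cf dF) scale1r scale0r addr0 q1D subrr mul0r addr0 subr0 mul1r.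
  have -> : phi1 0 = dotv D g0.
    by rewrite /phi1 /dotv; apply: eq_bigr => j _; congr (_ * _); rewrite scale0r addr0 /g0 mxE.
  ring.

pose P := fun t : R => dotv p0 (hess_app U (qt t) p0).
pose Q := fun t : R => dotv p0 (hess_app U (qt t) g0).
pose G := fun t : R => dotv g0 (hess_app U (qt t) g0).
pose tP := fun t : R => t * P t.
pose tQ := fun t : R => t * Q t.
pose tG := fun t : R => t * G t.
have cP0 : continuous P := cHd p0 p0.
have cQ0 : continuous Q := cHd p0 g0.
have cG0 : continuous G := cHd g0 g0.
have ctP : continuous tP := cont_mul (@cont_id R) cP0.
have ctQ : continuous tQ := cont_mul (@cont_id R) cQ0.
have ctG : continuous tG := cont_mul (@cont_id R) cG0.
have dDD : forall y, dotv D (hess_app U y D) = h ^+ 2 * dotv p0 (hess_app U y p0)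
    - h ^+ 3 * dotv p0 (hess_app U y g0) + h ^+ 4 / 4 * dotv g0 (hess_app U y g0).
  move=> y; rewrite DE hess_appD hess_appN !hess_appZ.
  rewrite !(dotvDl, dotvDr, dotvNl, dotvNr, dotvZl, dotvZr) (sym y p0 g0).
  by field.
have IU : int01 (fun t : R => (1 - t) * dotv D (hess_app U (qt t) D)) =
   h ^+ 2 * int01 P - h ^+ 2 * int01 tP - h ^+ 3 * int01 Q + h ^+ 3 * int01 tQ
   + h ^+ 4 / 4 * int01 G - h ^+ 4 / 4 * int01 tG.
  rewrite (int01_ext (g := fun t => \sum_(p <- [:: (h ^+ 2, P); (- h ^+ 2, tP); (- h ^+ 3, Q);
      (h ^+ 3, tQ); (h ^+ 4 / 4, G); (- (h ^+ 4 / 4), tG)]) p.1 * p.2 t)).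
    rewrite int01_lin; last by rewrite /=; repeat split.
    rewrite !big_cons big_nil /=; ring.
  move=> t; rewrite !big_cons big_nil /= dDD /tP /tQ /tG /P /Q /G; ring.
have R1 : int01 (fun t => dotv p0 (hess_app U (qt t) p0) * (1 / 2 - t)) = 1 / 2 * int01 P - int01 tP.
  rewrite (int01_ext (g := fun t => \sum_(p <- [:: (1 / 2, P); (-1, tP)]) p.1 * p.2 t)).
    rewrite int01_lin; last by rewrite /=; repeat split.
    rewrite !big_cons big_nil /=; ring.
  move=> t; rewrite !big_cons big_nil /= /tP /P; ring.
have R2 : int01 (fun t => dotv p0 (hess_app U (qt t) g0) * (t - 1 / 4)) = int01 tQ - 1 / 4 * int01 Q.
  rewrite (int01_ext (g := fun t => \sum_(p <- [:: (1, tQ); (- (1 / 4), Q)]) p.1 * p.2 t)).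
    rewrite int01_lin; last by rewrite /=; repeat split.
    rewrite !big_cons big_nil /=; ring.
  move=> t; rewrite !big_cons big_nil /= /tQ /Q; ring.
have R3 : int01 (fun t => dotv g0 (hess_app U (qt t) g0) * t) = int01 tG.
  by apply: int01_ext => t; rewrite /tG /G mulrC.
have K1 : dotv p0 (int01v (fun t => hess_app U (qt t) p0)) = int01 P.
  by rewrite dotv_int01v //; exact: cHa.
have K2 : dotv g0 (int01v (fun t => hess_app U (qt t) p0)) = int01 Q.
  rewrite dotv_int01v; last exact: cHa.
  by apply: int01_ext => t; rewrite sym.
have K3 : dotv p0 (int01v (fun t => hess_app U (qt t) g0)) = int01 Q.
  by rewrite dotv_int01v //; exact: cHa.
have K4 : dotv g0 (int01v (fun t => hess_app U (qt t) g0)) = int01 G.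
  by rewrite dotv_int01v //; exact: cHa.
rewrite R1 R2 R3.
have HamE : Ham U (leapfrog U h (q0, p0)) =
    U q1 + sqnorm (p0 - (h / 2) *: g0 - (h / 2) *: grad U q1) / 2 by [].
have Uq1 : U q1 = U q0 + dotv D g0 + int01 (fun t : R => (1 - t) * dotv D (hess_app U (qt t) D)).
  by rewrite FU; ring.
rewrite HamE /Ham /= gradE Uq1 IU.
move: K1 K2 K3 K4.
set a := int01v (fun t => hess_app U (qt t) p0).
set b := int01v (fun t => hess_app U (qt t) g0).
move=> K1 K2 K3 K4.
rewrite DE /sqnorm.
rewrite !(dotvDl, dotvDr, dotvNl, dotvNr, dotvZl, dotvZr).
rewrite ?[dotv g0 p0]dotvC ?[dotv a p0]dotvC ?[dotv b p0]dotvC ?[dotv a g0]dotvC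
  ?[dotv b g0]dotvC ?[dotv a b]dotvC.
rewrite K1 K2 K3 K4.

by field.
Qed.
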